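(* Let $a,b,c$ be real numbers such that either $a,b,c\ge0$ and $0<a+b\le c$, or $a,b\ge 0$, $c\le 0$ and $a+b+c>0$. Then for every real $r\neq 0$, $$\frac{(e^{2ar}-1)(e^{2br}-1)(e^{cr}+1)^2}{(e^{(a+b+c)r}-1)^2}\ \ge\ \frac{16ab}{(a+b+c)^2}.$$ *)

(* Defs.v *)
From Stdlib Require Import Reals.

(* Main.v *)
Require Import Defs.
From Coquelicot Require Import Coquelicot.
From Stdlib Require Import Reals Lra Psatz.
Open Scope R_scope.
Lemma mono (f df : R -> R) a b : a <= b ->
  (forall x, a <= x <= b -> is_derive f x (df x)) ->
  (forall x, a <= x <= b -> 0 <= df x) -> f a <= f b.
Proof.
  intros hab hd hp.
  destruct (MVT_gen f a b df) as [c [hc e]].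
  - intros x hx. rewrite Rmin_left in hx by lra. rewrite Rmax_right in hx by lra. apply hd; lra.
  - intros x hx. rewrite Rmin_left in hx by lra. rewrite Rmax_right in hx by lra.
    apply continuity_pt_filterlim. apply (ex_derive_continuous (V:=R_NormedModule)). eexists; apply hd; lra.
  - rewrite Rmin_left in hc by lra. rewrite Rmax_right in hc by lra.
    assert (0 <= df c * (b - a)) by (apply Rmult_le_pos; [apply hp; lra | lra]). lra.
Qed.

Lemma sinh_nonneg x : 0 <= x -> 0 <= sinh x.
Proof. intros h. destruct (Req_dec x 0) as [->|n]. rewrite sinh_0; lra.
  rewrite <- sinh_0. left. apply sinh_lt. lra. Qed.

Lemma cosh_pos x : 0 < cosh x.
Proof. unfold cosh. pose proof (exp_pos x). pose proof (exp_pos (-x)). lra. Qed.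

Lemma sinh_neg x : sinh (- x) = - sinh x.
Proof. unfold sinh. rewrite Ropp_involutive. lra. Qed.
Lemma cosh_neg x : cosh (- x) = cosh x.
Proof. unfold cosh. rewrite Ropp_involutive. lra. Qed.

Lemma K1 x : 0 <= x -> sinh x <= x * cosh x.
Proof.
  intros hx.
  assert (H := mono (fun t => t * cosh t - sinh t) (fun t => t * sinh t) 0 x hx).
  simpl in H. rewrite sinh_0, cosh_0 in H.
  assert (0 <= x * cosh x - sinh x); [|lra].
  replace 0 with (0*1-0) by ring. apply H.
  - intros t _. apply is_derive_Reals.
    replace (t * sinh t) with ((1 * cosh t + t * sinh t) - cosh t) by ring.
    apply derivable_pt_lim_minus; [|apply derivable_pt_lim_sinh].
    apply derivable_pt_lim_mult; [apply derivable_pt_lim_id|apply derivable_pt_lim_cosh].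
  - intros t ht. apply Rmult_le_pos; [lra|apply sinh_nonneg; lra].
Qed.

Lemma M s t : 0 <= s <= t -> t * sinh s <= s * sinh t.
Proof.
  intros [hs hst]. destruct (Req_dec s 0) as [->|n].
  { rewrite sinh_0. lra. }
  assert (hs0 : 0 < s) by lra.
  assert (H := mono (fun u => sinh u / u) (fun u => (u * cosh u - sinh u) / u^2) s t hst).
  assert (sinh s / s <= sinh t / t).
  { apply H.
    - intros u hu. apply is_derive_Reals.
      replace ((u * cosh u - sinh u) / u ^ 2) with ((cosh u * u - 1 * sinh u)/ (u²)) by (unfold Rsqr; field; lra).
      apply (derivable_pt_lim_div sinh id); [apply derivable_pt_lim_sinh|apply derivable_pt_lim_id|unfold id; intro; lra].
    - intros u hu. unfold Rdiv. apply Rmult_le_pos.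
      + pose proof (K1 u). lra.
      + left. apply Rinv_0_lt_compat. nra. }
  assert (0 < s) by lra. assert (0 < t) by lra.
  apply (Rmult_le_compat_r (s*t)) in H0; [|nra].
  replace (sinh s / s * (s*t)) with (t * sinh s) in H0 by (field; lra).
  replace (sinh t / t * (s*t)) with (s * sinh t) in H0 by (field; lra). lra.
Qed.
Ltac hyp_simpl := unfold sinh, cosh; unfold Rminus;
  repeat rewrite ?Ropp_plus_distr, ?Ropp_involutive, ?exp_plus, ?exp_Ropp.
Ltac nz := repeat split; apply Rgt_not_eq, exp_pos.

Lemma I1 t : cosh t - 1 = 2 * sinh (t/2) ^ 2.
Proof. assert (e : exp t = exp (t/2) * exp (t/2)) by (rewrite <- exp_plus; f_equal; field).
  unfold sinh, cosh. rewrite !exp_Ropp, e. pose proof (exp_pos (t/2)). field. lra. Qed.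
Lemma I2 x y : sinh x * sinh y = (cosh (x+y) - cosh (x-y))/2.
Proof. hyp_simpl. field. nz. Qed.
Lemma I3 s t : cosh s * sinh t = (sinh (t+s) + sinh (t-s))/2.
Proof. hyp_simpl. field. nz. Qed.
Lemma I4 s t : sinh s * cosh t = (sinh (t+s) - sinh (t-s))/2.
Proof. hyp_simpl. field. nz. Qed.
Lemma I5 u v : sinh (u+v) = sinh u * cosh v + cosh u * sinh v.
Proof. hyp_simpl. field. nz. Qed.
Lemma I6 t : sinh t ^ 2 = (exp (2*t) - 1)^2 / (4 * exp (2*t)).
Proof. assert (e : exp (2*t) = exp t * exp t) by (rewrite <- exp_plus; f_equal; ring).
  rewrite e. hyp_simpl. field. nz. Qed.
Lemma I7 t : cosh t ^ 2 = (exp (2*t) + 1)^2 / (4 * exp (2*t)).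
Proof. assert (e : exp (2*t) = exp t * exp t) by (rewrite <- exp_plus; f_equal; ring).
  rewrite e. hyp_simpl. field. nz. Qed.

Lemma LA d p : 0 <= d <= p -> (cosh d - 1) * p^2 <= (cosh p - 1) * d^2.
Proof. intros [hd hp]. rewrite !I1. pose proof (M (d/2) (p/2)) as h.
  assert (h1 : (p/2) * sinh (d/2) <= (d/2) * sinh (p/2)) by (apply h; lra).
  assert (0 <= sinh (d/2)) by (apply sinh_nonneg; lra).
  assert (h2 : 0 <= (p/2) * sinh (d/2)) by (apply Rmult_le_pos; lra).
  assert (h3 : ((p/2) * sinh (d/2))^2 <= ((d/2) * sinh (p/2))^2) by (apply pow_incr; lra).
  nra. Qed.

Lemma LB s t : 0 <= s <= t -> s * cosh s * sinh t <= t * sinh s * cosh t.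
Proof. intros [hs ht]. pose proof (M (t-s) (t+s)) as h.
  assert (h1 : (t+s) * sinh (t-s) <= (t-s) * sinh (t+s)) by (apply h; lra).
  rewrite Rmult_assoc, I3, Rmult_assoc, I4. nra. Qed.

Lemma key x y z : 0 <= x -> 0 <= y -> 0 < x + y ->
  (x + y <= z \/ (z <= 0 /\ 0 < x + y + z)) ->
  4*x*y*sinh((x+y+z)/2)^2 <= (x+y+z)^2 * sinh x * sinh y * cosh(z/2)^2.
Proof.
  intros hx hy hp hz.
  set (p := x + y). set (u := p/2). set (v := z/2).
  assert (S1 : 4*x*y*sinh u ^2 <= sinh x * sinh y * p^2).
  { assert (hA : (cosh (x-y) - 1) * p^2 <= (cosh p - 1) * (x-y)^2).
    { destruct (Rle_dec y x).
      - apply LA. unfold p; lra.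
      - replace (x - y) with (- (y - x)) by ring. rewrite cosh_neg.
        replace ((- (y-x))^2) with ((y-x)^2) by ring. apply LA. unfold p; lra. }
    rewrite I2. assert (e : sinh u ^ 2 = (cosh p - 1)/2) by (unfold u; rewrite I1; field).
    rewrite e. fold p. unfold p in *. nra. }
  assert (S2 : u * cosh u * sinh v <= v * sinh u * cosh v).
  { destruct hz as [hz | [hz1 hz2]].
    - apply LB. unfold u, v, p in *; lra.
    - pose proof (LB (-v) u) as h. rewrite cosh_neg, sinh_neg in h.
      assert (-v * cosh v * sinh u <= u * - sinh v * cosh u) by (apply h; unfold u, v, p in *; lra).
      nra. }
  assert (ew : (x+y+z)/2 = u + v) by (unfold u, v, p; field).
  assert (ew2 : x+y+z = 2*(u+v)) by (unfold u, v, p; field).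
  assert (hp2 : 0 < p) by (unfold p; lra). assert (hu : 0 < u) by (unfold u; lra).
  assert (huv : 0 <= u + v) by (unfold u, v, p in *; lra).
  assert (S3a : 0 <= p * sinh ((x+y+z)/2)).
  { apply Rmult_le_pos. lra. rewrite ew. apply sinh_nonneg; lra. }
  assert (S3b : p * sinh ((x+y+z)/2) <= (x+y+z) * sinh u * cosh v).
  { rewrite ew, ew2, I5. assert (p = 2*u) by (unfold u; field). rewrite H. nra. }
  assert (S4 : (p * sinh ((x+y+z)/2))^2 <= ((x+y+z) * sinh u * cosh v)^2) by (apply pow_incr; lra).
  set (W := sinh ((x+y+z)/2)) in *. set (w := x+y+z) in *.
  assert (hxy : 0 <= 4*x*y) by nra.
  assert (T1 : 4*x*y*(p*W)^2 <= 4*x*y*(w * sinh u * cosh v)^2) by (apply Rmult_le_compat_l; lra).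
  assert (T2 : (w*cosh v)^2 * (4*x*y*sinh u ^2) <= (w*cosh v)^2 * (sinh x * sinh y * p^2))
    by (apply Rmult_le_compat_l; [nra|lra]).
  assert (G : 4*x*y*W^2 * p^2 <= (w*cosh v)^2*(sinh x*sinh y*p^2)).
  { replace (4 * x * y * W ^ 2 * p ^ 2) with (4*x*y*(p*W)^2) by ring.
    eapply Rle_trans. apply T1. replace (4 * x * y * (w * sinh u * cosh v) ^ 2) with ((w*cosh v)^2 * (4*x*y*sinh u ^2)) by ring. exact T2. }
  assert (G2 : 4*x*y*W^2 <= w^2 * sinh x * sinh y * cosh v^2).
  { apply (Rmult_le_reg_r (p^2)). nra. replace (w ^ 2 * sinh x * sinh y * cosh v ^ 2 * p ^ 2) with ((w*cosh v)^2*(sinh x*sinh y*p^2)) by ring. exact G. }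
  unfold W, w, v, p in *. exact G2.
Qed.

Lemma sinh_nz t : t <> 0 -> sinh t <> 0.
Proof. intros h. destruct (Rlt_or_le 0 t).
  - pose proof (sinh_lt 0 t H). rewrite sinh_0 in H0. lra.
  - assert (t < 0) by (destruct H; [lra| exfalso; apply h; auto]).
    pose proof (sinh_lt t 0 H0). rewrite sinh_0 in H1. lra. Qed.

Lemma Epos (a b c r : R)
  (habc : (0 <= a /\ 0 <= b /\ 0 <= c /\ 0 < a + b /\ a + b <= c) \/
          (0 <= a /\ 0 <= b /\ c <= 0 /\ 0 < a + b + c)) (hr : 0 < r) :
  4*a*b*sinh((a+b+c)*r/2)^2 <= (a+b+c)^2 * sinh (a*r) * sinh (b*r) * cosh (c*r/2)^2.
Proof.
  assert (h := key (a*r) (b*r) (c*r)).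
  replace ((a*r + b*r + c*r)/2) with ((a+b+c)*r/2) in h by field.
  replace (a*r + b*r + c*r) with ((a+b+c)*r) in h by ring.
  assert (hh : 4 * (a * r) * (b * r) * sinh ((a + b + c) * r / 2) ^ 2 <=
      ((a + b + c) * r) ^ 2 * sinh (a * r) * sinh (b * r) * cosh (c * r / 2) ^ 2).
  { apply h.
    - destruct habc; apply Rmult_le_pos; lra.
    - destruct habc; apply Rmult_le_pos; lra.
    - replace (a*r+b*r) with ((a+b)*r) by ring. apply Rmult_lt_0_compat; lra.
    - destruct habc as [H|H].
      + left. replace (a*r+b*r) with ((a+b)*r) by ring. apply Rmult_le_compat_r; lra.
      + right. split. replace 0 with (0*r) by ring. apply Rmult_le_compat_r; lra.
        replace (a*r+b*r+c*r) with ((a+b+c)*r) by ring. apply Rmult_lt_0_compat; lra. }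
  apply (Rmult_le_reg_r (r^2)). nra.
  replace (4 * a * b * sinh ((a + b + c) * r / 2) ^ 2 * r ^ 2) with
    (4 * (a * r) * (b * r) * sinh ((a + b + c) * r / 2) ^ 2) by ring.
  eapply Rle_trans. exact hh. right. ring.
Qed.

Lemma Eall (a b c r : R)
  (habc : (0 <= a /\ 0 <= b /\ 0 <= c /\ 0 < a + b /\ a + b <= c) \/
          (0 <= a /\ 0 <= b /\ c <= 0 /\ 0 < a + b + c)) (hr : r <> 0) :
  4*a*b*sinh((a+b+c)*r/2)^2 <= (a+b+c)^2 * sinh (a*r) * sinh (b*r) * cosh (c*r/2)^2.
Proof.
  destruct (Rlt_or_le 0 r). now apply Epos.
  assert (0 < -r) by (destruct H; [lra|exfalso; apply hr; auto]).
  pose proof (Epos a b c (-r) habc H0) as h.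
  replace ((a+b+c)*-r/2) with (-((a+b+c)*r/2)) in h by field.
  replace (a*-r) with (-(a*r)) in h by ring.
  replace (b*-r) with (-(b*r)) in h by ring.
  replace (c*-r/2) with (-(c*r/2)) in h by field.
  rewrite !sinh_neg, cosh_neg in h. nra.
Qed.

Lemma J1 t : exp (2*t) - 1 = 2 * exp t * sinh t.
Proof. assert (e : exp (2*t) = exp t * exp t) by (rewrite <- exp_plus; f_equal; ring).
  rewrite e. unfold sinh. rewrite exp_Ropp. field. apply Rgt_not_eq, exp_pos. Qed.
Lemma J2 t : exp (2*t) + 1 = 2 * exp t * cosh t.
Proof. assert (e : exp (2*t) = exp t * exp t) by (rewrite <- exp_plus; f_equal; ring).
  rewrite e. unfold cosh. rewrite exp_Ropp. field. apply Rgt_not_eq, exp_pos. Qed.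

Theorem lemma4p1 (a b c : R)
  (habc : (0 <= a /\ 0 <= b /\ 0 <= c /\ 0 < a + b /\ a + b <= c) \/
          (0 <= a /\ 0 <= b /\ c <= 0 /\ 0 < a + b + c))
  (r : R) (hr : r <> 0) :
  16 * a * b / (a + b + c) ^ 2 <=
  (exp (2 * a * r) - 1) * (exp (2 * b * r) - 1) * (exp (c * r) + 1) ^ 2
    / (exp ((a + b + c) * r) - 1) ^ 2.
Proof.
  pose proof (Eall a b c r habc hr) as E.
  assert (hs : 0 < a+b+c) by (destruct habc; lra).
  set (s := a+b+c) in *.
  replace (2*a*r) with (2*(a*r)) by ring.
  replace (2*b*r) with (2*(b*r)) by ring.
  replace (c*r) with (2*(c*r/2)) by field.
  replace (s*r) with (2*(s*r/2)) by field.
  rewrite !J1, J2.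
  assert (J4 : exp (s*r/2)^2 = exp (a*r) * exp (b*r) * exp (c*r/2)^2).
  { rewrite <- !exp_plus. simpl. rewrite !Rmult_1_r, <- !exp_plus. f_equal. unfold s. field. }
  assert (hnz : sinh (s*r/2) <> 0).
  { apply sinh_nz. intro h. assert (s * r = 0) by lra. apply Rmult_integral in H. lra. }
  pose proof (exp_pos (a*r)). pose proof (exp_pos (b*r)). pose proof (exp_pos (c*r/2)).
  replace ((2 * exp (s * r / 2) * sinh (s * r / 2)) ^ 2) with (4 * exp (s*r/2)^2 * sinh (s * r / 2)^2) by ring.
  rewrite J4.
  assert (hsh : 0 < sinh (s*r/2)^2).
  { assert (0 < sinh (s*r/2)^2) by (apply pow2_gt_0; auto). lra. }
  set (Ea := exp (a*r)) in *. set (Eb := exp (b*r)) in *. set (Ec := exp (c*r/2)) in *.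
  set (Sa := sinh (a*r)) in *. set (Sb := sinh (b*r)) in *. set (Cc := cosh (c*r/2)) in *.
  set (Ss := sinh (s*r/2)) in *.
  replace (2 * Ea * Sa * (2 * Eb * Sb) * (2 * Ec * Cc) ^ 2 / (4 * (Ea * Eb * Ec ^ 2) * Ss ^ 2))
    with (4 * Sa * Sb * Cc^2 / Ss^2) by (field; repeat split; try exact hnz; apply Rgt_not_eq; lra).
  apply (Rmult_le_reg_r (s^2 * Ss^2)). apply Rmult_lt_0_compat; [apply pow_lt; lra| exact hsh].
  replace (16 * a * b / s ^ 2 * (s ^ 2 * Ss ^ 2)) with (4 * (4*a*b*Ss^2)) by (field; repeat split; try exact hnz; apply Rgt_not_eq; lra).
  replace (4 * Sa * Sb * Cc ^ 2 / Ss ^ 2 * (s ^ 2 * Ss ^ 2)) with (4 * (s^2 * Sa * Sb * Cc^2)) by (field; repeat split; try exact hnz; apply Rgt_not_eq; lra).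
  lra.
Qed.
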